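(* For every abelian category $\mathcal{A}$, the category $\widetilde{Q}\mathcal{A}$ is filtered.
   Context: For an abelian category $\mathcal{A}$, the category $\widetilde{Q}\mathcal{A}$ has the same objects as $\mathcal{A}$. A morphism $M\to M'$ is represented by a span $M\overset{p}{\twoheadleftarrow}N\overset{\iota}{\hookrightarrow}M'$ with $p$ an epimorphism and $\iota$ a monomorphism; two spans $(p_f,\iota_f)$ via $N$ and $(p_g,\iota_g)$ via $N'$ represent the same morphism if they are related by the equivalence relation generated by: $f\sim g$ whenever there is a monomorphism $j:N\hookrightarrow N'$ with $p_g\circ j=p_f$ and $\iota_g\circ j=\iota_f$ (in particular isomorphic spans are identified). Composition is induced by composing spans via fiber products (as in Quillen's Q-construction). *)

(* Defs.v *)
(* Hom-sets are types with
   Leibniz equality (strict categories). *)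
From Stdlib Require Import Relations.

Set Implicit Arguments.
Unset Strict Implicit.

Record Category := {
  Obj :> Type;
  Hom : Obj -> Obj -> Type;
  idm : forall A, Hom A A;
  comp : forall A B C, Hom B C -> Hom A B -> Hom A C;
  comp_assoc : forall A B C D (h : Hom C D) (g : Hom B C) (f : Hom A B),
      comp h (comp g f) = comp (comp h g) f;
  comp_id_l : forall A B (f : Hom A B), comp (idm B) f = f;
  comp_id_r : forall A B (f : Hom A B), comp f (idm A) = f
}.

Arguments Hom {c} _ _.
Arguments idm {c} _.
Arguments comp {c A B C} _ _.

Section Abelian.
Variable C : Category.

Definition Mono {A B : C} (f : Hom A B) : Prop :=
  forall Z (g h : Hom Z A), comp f g = comp f h -> g = h.

Definition Epi {A B : C} (f : Hom A B) : Prop :=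
  forall Z (g h : Hom B Z), comp g f = comp h f -> g = h.

Definition ex_unique_hom {A B : C} (P : Hom A B -> Prop) : Prop :=
  exists u, P u /\ forall u', P u' -> u' = u.

Definition is_initial (Z : C) : Prop := forall A : C, ex_unique_hom (fun _ : Hom Z A => True).
Definition is_terminal (Z : C) : Prop := forall A : C, ex_unique_hom (fun _ : Hom A Z => True).
Definition is_zero_obj (Z : C) : Prop := is_initial Z /\ is_terminal Z.

Definition is_zero_mor {A B : C} (f : Hom A B) : Prop :=
  exists (Z : C) (a : Hom A Z) (b : Hom Z B), is_zero_obj Z /\ f = comp b a.

Definition is_kernel {A B K : C} (f : Hom A B) (k : Hom K A) : Prop :=
  is_zero_mor (comp f k) /\
  forall (Z : C) (g : Hom Z A), is_zero_mor (comp f g) ->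
    ex_unique_hom (fun u : Hom Z K => comp k u = g).

Definition is_cokernel {A B Q : C} (f : Hom A B) (c : Hom B Q) : Prop :=
  is_zero_mor (comp c f) /\
  forall (Z : C) (g : Hom B Z), is_zero_mor (comp g f) ->
    ex_unique_hom (fun u : Hom Q Z => comp u c = g).

Definition is_product {A B P : C} (p1 : Hom P A) (p2 : Hom P B) : Prop :=
  forall (Z : C) (f : Hom Z A) (g : Hom Z B),
    ex_unique_hom (fun u : Hom Z P => comp p1 u = f /\ comp p2 u = g).

Definition is_coproduct {A B S : C} (i1 : Hom A S) (i2 : Hom B S) : Prop :=
  forall (Z : C) (f : Hom A Z) (g : Hom B Z),
    ex_unique_hom (fun u : Hom S Z => comp u i1 = f /\ comp u i2 = g).

(* Freyd's definition: zero object, binary products and coproducts,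
   kernels and cokernels, every mono is a kernel, every epi a cokernel. *)
Definition IsAbelian : Prop :=
  (exists Z : C, is_zero_obj Z) /\
  (forall A B : C, exists (P : C) (p1 : Hom P A) (p2 : Hom P B), is_product p1 p2) /\
  (forall A B : C, exists (S : C) (i1 : Hom A S) (i2 : Hom B S), is_coproduct i1 i2) /\
  (forall (A B : C) (f : Hom A B), exists (K : C) (k : Hom K A), is_kernel f k) /\
  (forall (A B : C) (f : Hom A B), exists (Q : C) (c : Hom B Q), is_cokernel f c) /\
  (forall (K A : C) (m : Hom K A), Mono m -> exists (B : C) (f : Hom A B), is_kernel f m) /\
  (forall (B Q : C) (e : Hom B Q), Epi e -> exists (A : C) (f : Hom A B), is_cokernel f e).

Definition is_pullback {X Y W P : C} (f : Hom X W) (g : Hom Y W)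
    (p1 : Hom P X) (p2 : Hom P Y) : Prop :=
  comp f p1 = comp g p2 /\
  forall (Z : C) (a : Hom Z X) (b : Hom Z Y), comp f a = comp g b ->
    ex_unique_hom (fun u : Hom Z P => comp p1 u = a /\ comp p2 u = b).

(* The category Q~A : spans  M <<-p- N -i->> M'                        *)
Record Span (M M' : C) := {
  apex : C;
  sp : Hom apex M;
  si : Hom apex M';
  sp_epi : Epi sp;
  si_mono : Mono si
}.
Arguments apex {M M'} _.
Arguments sp {M M'} _.
Arguments si {M M'} _.

Definition span_le {M M' : C} (f g : Span M M') : Prop :=
  exists j : Hom (apex f) (apex g),
    Mono j /\ comp (sp g) j = sp f /\ comp (si g) j = si f.

(* equality of morphisms of Q~A: the equivalence relation generated *)
Definition span_equiv {M M' : C} : relation (Span M M') :=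
  clos_refl_sym_trans (Span M M') span_le.

(* u is (a representative of) the composite  t o s  computed via the fiber
   product of  si s : N -> M'  and  sp t : N' -> M'  (Quillen's rule). *)
Definition is_span_comp {M M' M'' : C} (s : Span M M') (t : Span M' M'')
    (u : Span M M'') : Prop :=
  exists (p1 : Hom (apex u) (apex s)) (p2 : Hom (apex u) (apex t)),
    is_pullback (si s) (sp t) p1 p2 /\
    sp u = comp (sp s) p1 /\ si u = comp (si t) p2.

(* Q~A is filtered:
   (i) it is nonempty;
   (ii) any two objects admit morphisms to a common object;
   (iii) any two parallel morphisms f, g : M -> M' are equalized by some
         h : M' -> M'', i.e. h o f = h o g in Q~A. *)
Definition QtildeFiltered : Prop :=
  (exists M : C, True) /\
  (forall M1 M2 : C, exists (N : C) (f1 : Span M1 N) (f2 : Span M2 N), True) /\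
  (forall (M M' : C) (f g : Span M M'),
     exists (M'' : C) (h : Span M' M'') (hf hg : Span M M''),
       is_span_comp f h hf /\ is_span_comp g h hg /\ span_equiv hf hg).

End Abelian.

(* Main.v *)
Require Import Defs.
From Stdlib Require Import Relations.

Section Aux.
Variable C : Category.

Lemma split_mono (A B : C) (f : Hom A B) (r : Hom B A) :
  comp r f = idm A -> Mono f.
Proof.
  intros E Z g h H.
  rewrite <- (comp_id_l g), <- (comp_id_l h), <- E, <- !comp_assoc, H.
  reflexivity.
Qed.

Lemma split_epi (A B : C) (f : Hom A B) (s : Hom B A) :
  comp f s = idm B -> Epi f.
Proof.
  intros E Z g h H.
  rewrite <- (comp_id_r g), <- (comp_id_r h), <- E, !comp_assoc, H.
  reflexivity.
Qed.

Lemma mono_id (A : C) : Mono (idm A).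
Proof. intros Z g h H. rewrite !comp_id_l in H. exact H. Qed.

Lemma epi_comp (A B D : C) (f : Hom A B) (g : Hom B D) :
  Epi f -> Epi g -> Epi (comp g f).
Proof.
  intros Hf Hg Z a b H. apply Hg, Hf. rewrite <- !comp_assoc. exact H.
Qed.

Lemma mono_comp (A B D : C) (f : Hom A B) (g : Hom B D) :
  Mono f -> Mono g -> Mono (comp g f).
Proof.
  intros Hf Hg Z a b H. apply Hf, Hg. rewrite !comp_assoc. exact H.
Qed.

Lemma prod_ext (A B P : C) (p1 : Hom P A) (p2 : Hom P B) (HP : is_product p1 p2)
  (Z : C) (u v : Hom Z P) :
  comp p1 u = comp p1 v -> comp p2 u = comp p2 v -> u = v.
Proof.
  intros E1 E2. destruct (HP Z (comp p1 u) (comp p2 u)) as [w [_ U]].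
  rewrite (U u), (U v); auto.
Qed.

Arguments split_mono {A B f r}.
Arguments split_epi {A B f s}.
Arguments epi_comp {A B D f g}.
Arguments mono_comp {A B D f g}.
Arguments prod_ext {A B P p1 p2} HP {Z u v}.

Definition mkh {M' K : C} {pr1 : Hom K M'} (e1 : Epi pr1) : Span M' K :=
  {| apex := K; sp := pr1; si := idm K; sp_epi := e1; si_mono := mono_id K |}.

Lemma key (M M' K : C) (pr1 : Hom K M') (pr2 : Hom K M) (HK : is_product pr1 pr2)
  (e1 : Epi pr1) (e2 : Epi pr2)
  (Hprod : forall A B : C, exists (P : C) (p1 : Hom P A) (p2 : Hom P B), is_product p1 p2)
  (f : Span M M') :
  exists hf, is_span_comp f (mkh e1) hf /\ span_equiv hf (mkh e2).
Proof.
  destruct f as [N p i pe im]; simpl.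
  destruct (Hprod N M) as [P [pN [pM HP]]].
  destruct (HK P (comp i pN) pM) as [p2 [[Hp21 Hp22] _]].
  destruct (HP N (idm N) p) as [j [[Hj1 Hj2] _]].
  destruct (HK N i p) as [gp [[Hg1 Hg2] _]].
  assert (monop2 : Mono p2).
  { intros Z a b H.
    apply (prod_ext HP).
    - apply im. rewrite !comp_assoc, <- Hp21, <- !comp_assoc, H. reflexivity.
    - rewrite <- Hp22, <- !comp_assoc, H. reflexivity. }
  assert (epipN : Epi pN) by exact (split_epi Hj1).
  assert (monog : Mono gp).
  { intros Z a b H. apply im. rewrite <- Hg1, <- !comp_assoc, H. reflexivity. }
  pose (hf := {| apex := P; sp := comp p pN; si := comp (idm K) p2;
                 sp_epi := epi_comp epipN pe;
                 si_mono := mono_comp monop2 (mono_id K) |} : Span M K).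
  pose (G := {| apex := N; sp := p; si := gp; sp_epi := pe; si_mono := monog |}
             : Span M K).
  exists hf. split.
  - exists pN, p2. simpl. split; [|split; reflexivity].
    split; [symmetry; exact Hp21|].
    intros Z a b Hab.
    destruct (HP Z a (comp pr2 b)) as [u [[Hu1 Hu2] _]].
    exists u. split.
    + split; [exact Hu1|].
      apply (prod_ext HK).
      * rewrite comp_assoc, Hp21, <- comp_assoc, Hu1. exact Hab.
      * rewrite comp_assoc, Hp22. exact Hu2.
    + intros u' [H1 H2]. apply (prod_ext HP).
      * rewrite H1, Hu1. reflexivity.
      * rewrite Hu2, <- Hp22, <- comp_assoc, H2. reflexivity.
  - apply rst_trans with G.
    + apply rst_sym, rst_step. exists j. simpl. split; [exact (split_mono Hj1)|split].
      * rewrite <- comp_assoc, Hj1, comp_id_r. reflexivity.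
      * rewrite comp_id_l. apply (prod_ext HK).
        -- rewrite comp_assoc, Hp21, <- comp_assoc, Hj1, comp_id_r, Hg1. reflexivity.
        -- rewrite comp_assoc, Hp22, Hj2, Hg2. reflexivity.
    + apply rst_step. exists gp. simpl. split; [exact monog|split].
      * exact Hg2.
      * apply comp_id_l.
Qed.

End Aux.

Theorem mainTheorem4 : forall C : Category, IsAbelian C -> QtildeFiltered C.
Proof.
  intros C [[Z [Hi Ht]] [Hprod _]].
  assert (anyhom : forall A B : C, exists _ : Hom A B, True).
  { intros A B. destruct (Ht A) as [a _]. destruct (Hi B) as [b _].
    exists (comp b a). exact I. }
  split; [exists Z; exact I|split].
  - intros M1 M2. destruct (Hprod M1 M2) as [P [q1 [q2 HP]]].
    destruct (anyhom M1 M2) as [z _]. destruct (anyhom M2 M1) as [z' _].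
    destruct (HP M1 (idm M1) z) as [u [[Hu1 Hu2] _]].
    destruct (HP M2 z' (idm M2)) as [v [[Hv1 Hv2] _]].
    exists P.
    exists {| apex := M1; sp := idm M1; si := u;
              sp_epi := @split_epi C _ _ _ _ (comp_id_l (idm M1)); si_mono := @split_mono C _ _ _ _ Hu1 |}.
    exists {| apex := M2; sp := idm M2; si := v;
              sp_epi := @split_epi C _ _ _ _ (comp_id_l (idm M2)); si_mono := @split_mono C _ _ _ _ Hv2 |}.
    exact I.
  - intros M M' f g.
    destruct (Hprod M' M) as [K [pr1 [pr2 HK]]].
    destruct (anyhom M' M) as [z _]. destruct (anyhom M M') as [z' _].
    destruct (HK M' (idm M') z) as [s1 [[Hs1 _] _]].
    destruct (HK M z' (idm M)) as [s2 [[_ Hs2] _]].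
    pose proof (@split_epi C _ _ _ _ Hs1) as e1. pose proof (@split_epi C _ _ _ _ Hs2) as e2.
    destruct (@key C _ _ _ _ _ HK e1 e2 Hprod f) as [hf [Hf Ef]].
    destruct (@key C _ _ _ _ _ HK e1 e2 Hprod g) as [hg [Hg Eg]].
    exists K, (mkh C e1), hf, hg. split; [exact Hf|split; [exact Hg|]].
    apply rst_trans with (mkh C e2); [exact Ef|apply rst_sym; exact Eg].
Qed.
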